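(* Let $(\mathbf{X},\mathbf{p})$ be a $\{1,k\}$-payment equilibrium. If some agent $i$ is pEF1 towards another agent $j$ but is not $(2-1/k)$-pEFX towards $j$, then $p(X_j)<k$.
   Context: Fix $k>1$. Agents $N$, chores $M$, additive costs $c_i(e)\in\{1,k\}$. An allocation $\mathbf{X}$ partitions $M$ into bundles $X_i$. A payment vector assigns $p(e)>0$, $p(X)=\sum_{e\in X}p(e)$; $\alpha_{i,e}=c_i(e)/p(e)$, $\alpha_i=\min_e\alpha_{i,e}$, $\mathsf{MPB}_i=\{e:\alpha_{i,e}=\alpha_i\}$; $(\mathbf{X},\mathbf{p})$ is a $\{1,k\}$-payment equilibrium if $X_i\subseteq\mathsf{MPB}_i$ for all $i$ and $p(e)\in\{1,k\}$ for all $e$. Agent $i$ is pEF1 towards $j$ if $X_i=\emptyset$ or there is $e\in X_i$ with $p(X_i\setminus\{e\})\le p(X_j)$; $i$ is $\beta$-pEFX towards $j$ if $X_i=\emptyset$ or $p(X_i\setminus\{e\})\le\beta\,p(X_j)$ for all $e\in X_i$. *)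

(* Defs.v *)
From mathcomp Require Import all_boot all_order all_algebra.
Set Implicit Arguments. Unset Strict Implicit. Unset Printing Implicit Defensive.
Import Order.TTheory GRing.Theory Num.Theory.
Local Open Scope ring_scope.

Section Fair.
Variables (R : realFieldType) (agent chore : finType).

(* An allocation partitioning M among agents: each chore is assigned to one agent. *)
Definition bundle (X : chore -> agent) (i : agent) : {set chore} :=
  [set e | X e == i].

Definition pay (p : chore -> R) (S : {set chore}) : R := \sum_(e in S) p e.

Definition alpha (c : agent -> chore -> R) (p : chore -> R) (i : agent) (e : chore) : R :=
  c i e / p e.

Definition MPB (c : agent -> chore -> R) (p : chore -> R) (i : agent) (e : chore) : Prop :=
  forall e' : chore, alpha c p i e <= alpha c p i e'.

Definition pay_equilibrium_1k (k : R) (c : agent -> chore -> R)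
    (X : chore -> agent) (p : chore -> R) : Prop :=
  (forall e, 0 < p e) /\
  (forall i e, e \in bundle X i -> MPB c p i e) /\
  (forall e, p e = 1 \/ p e = k).

Definition pEF1 (X : chore -> agent) (p : chore -> R) (i j : agent) : Prop :=
  bundle X i = set0 \/
  exists2 e, e \in bundle X i & pay p (bundle X i :\ e) <= pay p (bundle X j).

Definition beta_pEFX (beta : R) (X : chore -> agent) (p : chore -> R) (i j : agent) : Prop :=
  bundle X i = set0 \/
  forall e, e \in bundle X i -> pay p (bundle X i :\ e) <= beta * pay p (bundle X j).

End Fair.

(* Main.v *)
Require Import Defs.
From mathcomp Require Import all_boot all_order all_algebra.
From mathcomp Require Import lra.
Import Order.TTheory GRing.Theory Num.Theory.
Local Open Scope ring_scope.

Lemma payD1 {R : realFieldType} {chore : finType} (p : chore -> R) {S : {set chore}} {e} :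
  e \in S -> pay p S = p e + pay p (S :\ e).
Proof.
move=> He; rewrite /pay (bigD1 e He) /=; congr (_ + _).
by apply: eq_bigl => x; rewrite in_setD1 andbC.
Qed.

Theorem lemma7 (R : realFieldType) (agent chore : finType) (k : R)
    (c : agent -> chore -> R) (X : chore -> agent) (p : chore -> R) (i j : agent) :
  1 < k ->
  (forall a e, c a e = 1 \/ c a e = k) ->
  pay_equilibrium_1k k c X p ->
  i != j ->
  pEF1 X p i j ->
  ~ beta_pEFX (2 - k^-1) X p i j ->
  pay p (bundle X j) < k.
Proof.
move=> k1 _ [pp [_ pk]] _ [Hi0|[e He Hle]] Hn.
  by case: Hn; left.
rewrite ltNge; apply/negP => Hk; apply: Hn; right => e' He'.
have E1 := payD1 p He; have E2 := payD1 p He'.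
have pe : p e <= k by case: (pk e) => ->; lra.
have pe' : 1 <= p e' by case: (pk e') => ->; lra.
have ku : k * k^-1 = 1 by rewrite mulfV //; apply/eqP => k0; rewrite k0 in k1; lra.
have u0 : 0 < k^-1 by rewrite invr_gt0; lra.
set P := pay p (bundle X j) in Hle Hk *.
have H : 0 <= k^-1 * ((k - 1) * (P - k)).
  apply: mulr_ge0; first lra.
  apply: mulr_ge0; lra.
nra.
Qed.
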